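(* Let $K$ be a simplicial complex, $X\cup Y=K_0$ a cover of its vertex set, $A:=X\cap Y$, $P:=\{\sigma\in K\mid\sigma\subset X\text{ or }\sigma\subset Y\text{ or }\sigma\cap A\neq\emptyset\}$, and $g\colon P\hookrightarrow K$ the poset inclusion. For a simplex $\sigma$ of $K$, let $\sigma\!\uparrow\! g$ be the poset of simplices $\tau\in P$ with $\sigma\subset\tau$ (ordered by inclusion), let $\psi_\sigma\colon\mathrm{St}(\sigma,A)\to\sigma\!\uparrow\! g$ be $\mu\mapsto\mu\cup\sigma$, and let $\phi_\sigma\colon\sigma\!\uparrow\! g\to\mathrm{St}(\sigma)$ be $\tau\mapsto\tau$. Then: (1) if $\sigma\in P$, then $\sigma\!\uparrow\! g$ is contractible and $\phi_\sigma$ is a weak equivalence; (2) if $\sigma\in K\setminus P$, then $\psi_\sigma$ is a weak equivalence.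
   Context: A simplicial complex is a collection of finite nonempty subsets of a fixed set closed under taking nonempty subsets; $K_0$ is its vertex set and its simplices form a poset under inclusion. $\mathrm{St}(\sigma):=\{\mu\in K\mid\sigma\cup\mu\in K\}$ and $\mathrm{St}(\sigma,A):=\{\mu\subset A\mid 0<|\mu|<\infty,\ \mu\cup\sigma\in K\}$, both regarded as posets under inclusion. Homotopical notions for posets/functors refer to their nerves. *)

(* Defs.v *)
From HB Require Import structures.
From mathcomp Require Import all_boot all_order all_algebra.
From mathcomp Require Import finmap.
From mathcomp Require Import boolp classical_sets.
From mathcomp Require Import Rstruct.
Set Implicit Arguments. Unset Strict Implicit. Unset Printing Implicit Defensive.
Import Order.TTheory GRing.Theory Num.Theory.
Local Open Scope ring_scope.
Local Open Scope fset_scope.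

Notation R := Rdefinitions.R.

Section Complexes.
Variable V : choiceType.

Definition simplicial_complex (K : {fset V} -> Prop) : Prop :=
  (forall s, K s -> s != fset0) /\
  (forall s t, K s -> t `<=` s -> t != fset0 -> K t).

Definition vertices (K : {fset V} -> Prop) (v : V) : Prop := K [fset v].

Definition Star (K : {fset V} -> Prop) (sigma : {fset V}) (mu : {fset V}) : Prop :=
  K mu /\ K (sigma `|` mu).

Definition StarIn (K : {fset V} -> Prop) (sigma : {fset V}) (A : V -> Prop)
  (mu : {fset V}) : Prop :=
  (forall v, v \in mu -> A v) /\ mu != fset0 /\ K (mu `|` sigma).

Definition up_inclusion (P : {fset V} -> Prop) (sigma : {fset V}) (tau : {fset V}) : Prop :=
  P tau /\ sigma `<=` tau.

End Complexes.

Section Spaces.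

Record space := Space {
  carrier : Type;
  pts : carrier -> Prop;
  opn : (carrier -> Prop) -> Prop }.

(* f : X -> Y continuous: maps points to points and pulls back open sets
   to open sets (traces on the point sets) *)
Definition cont (X Y : space) (f : carrier X -> carrier Y) : Prop :=
  (forall x, pts x -> pts (f x)) /\
  (forall U, opn U -> exists2 W, opn W & forall x, pts x -> (W x <-> U (f x))).

Definition unit_interval (t : R) : Prop := 0 <= t <= 1.

Definition cube (n : nat) : space :=
  @Space ('I_n -> R) (fun t => forall i, unit_interval (t i))
    (fun W => forall t, (forall i, unit_interval (t i)) -> W t ->
       exists2 e : R, 0 < e & forall t', (forall i, unit_interval (t' i)) ->
          (forall i, `|t i - t' i| < e) -> W t').

Definition cube_boundary (n : nat) (t : 'I_n -> R) : Prop :=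
  exists i, t i = 0 \/ t i = 1.

Definition prodI (X : space) : space :=
  @Space (carrier X * R)%type (fun z => pts z.1 /\ unit_interval z.2)
    (fun W => forall x t, pts x -> unit_interval t -> W (x, t) ->
       exists U, [/\ opn U, U x &
         exists2 e : R, 0 < e & forall x' t', pts x' -> U x' -> unit_interval t' ->
            `|t - t'| < e -> W (x', t')]).

Definition homotopic_rel_boundary (X : space) (n : nat)
  (h1 h2 : ('I_n -> R) -> carrier X) : Prop :=
  exists H : ('I_n -> R) * R -> carrier X,
    [/\ @cont (prodI (cube n)) X H,
        forall t, (forall i, unit_interval (t i)) -> H (t, 0) = h1 t,
        forall t, (forall i, unit_interval (t i)) -> H (t, 1) = h2 t &
        forall t s, (forall i, unit_interval (t i)) -> cube_boundary t ->
          unit_interval s -> H (t, s) = h1 t].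

Arguments homotopic_rel_boundary {X n} h1 h2.

(* representatives of elements of pi_n(X, x): maps (I^n, dI^n) -> (X, x).
   For n = 0, I^0 is a point and dI^0 is empty, giving pi_0. *)
Definition based_map (X : space) (n : nat) (x : carrier X)
  (h : ('I_n -> R) -> carrier X) : Prop :=
  @cont (cube n) X h /\
  (forall t, (forall i, unit_interval (t i)) -> cube_boundary t -> h t = x).

Arguments based_map {X} n x h.

(* f is a weak homotopy equivalence: continuous and, for every n >= 0 and
   every base point x, pi_n(f) : pi_n(X, x) -> pi_n(Y, f x) is bijective. *)
Definition weak_equivalence (X Y : space) (f : carrier X -> carrier Y) : Prop :=
  cont f /\
  forall (n : nat) (x : carrier X), pts x ->
    (forall g, based_map n (f x) g ->
       exists2 h, based_map n x h & homotopic_rel_boundary (f \o h) g) /\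
    (forall h1 h2, based_map n x h1 -> based_map n x h2 ->
       homotopic_rel_boundary (f \o h1) (f \o h2) ->
       homotopic_rel_boundary h1 h2).

Definition contractible (X : space) : Prop :=
  exists2 x0, pts x0 &
    exists H : carrier X * R -> carrier X,
      [/\ @cont (prodI X) X H,
          forall x, pts x -> H (x, 0) = x &
          forall x, pts x -> H (x, 1) = x0].

End Spaces.

Section Nerve.
Variable V : choiceType.

(* a poset of finite subsets of V, ordered by inclusion, given by its members *)
Definition fposet := {fset V} -> Prop.

(* finite chains of the poset S (simplices of the nerve), as duplicate-free lists *)
Definition is_chain (S : fposet) (c : seq {fset V}) : Prop :=
  [/\ uniq c, forall x, x \in c -> S x &
      forall x y, x \in c -> y \in c -> (x `<=` y) || (y `<=` x)].

Definition supp_in (c : seq {fset V}) (p : {fset V} -> R) : Prop :=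
  forall x, x \notin c -> p x = 0.

(* points of the geometric realization |N(S)|: barycentric coordinates
   supported on a chain *)
Definition real_pt (S : fposet) (p : {fset V} -> R) : Prop :=
  exists c, [/\ is_chain S c, supp_in c p, (forall x, 0 <= p x) &
                \sum_(x <- c) p x = 1].

(* the weak (coherent) topology: U is open iff its trace on every closed
   simplex (chain c) is open in that simplex's Euclidean topology *)
Definition real_open (S : fposet) (U : ({fset V} -> R) -> Prop) : Prop :=
  forall c p, is_chain S c -> real_pt S p -> supp_in c p -> U p ->
    exists2 e : R, 0 < e & forall q, real_pt S q -> supp_in c q ->
      (forall x, x \in c -> `|p x - q x| < e) -> U q.

Definition realization (S : fposet) : space :=
  @Space ({fset V} -> R) (real_pt S) (real_open S).

Definition support_list (p : {fset V} -> R) : seq {fset V} :=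
  xget [::] (fun c => uniq c /\ supp_in c p).

(* the map |N(f)| induced by a poset map f on realizations (pushforward of
   barycentric coordinates) *)
Definition realize_map (f : {fset V} -> {fset V}) (p : {fset V} -> R) : {fset V} -> R :=
  fun y => \sum_(x <- support_list p | f x == y) p x.

Definition poset_contractible (S : fposet) : Prop := contractible (realization S).

Definition poset_weak_equivalence (S T : fposet) (f : {fset V} -> {fset V}) : Prop :=
  (forall x, S x -> T (f x)) /\
   (forall x y, S x -> S y -> x `<=` y -> f x `<=` f y) /\
   @weak_equivalence (realization S) (realization T) (realize_map f).

End Nerve.

(* Main.v *)
Require Import Defs.
From HB Require Import structures.
From mathcomp Require Import all_boot all_order all_algebra finmap.
From mathcomp Require Import boolp classical_sets reals Rstruct.
From mathcomp.algebra_tactics Require Import ring lra.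
Set Implicit Arguments. Unset Strict Implicit. Unset Printing Implicit Defensive.
Import Order.TTheory GRing.Theory Num.Theory.
Section Tube.
Local Open Scope ring_scope.
Lemma tube (Q : Type) (Good : Q -> R -> Prop) (Near : R -> Q -> Prop) (a b : R) :
  (forall d d' q, d' <= d -> Near d' q -> Near d q) -> a <= b ->
  (forall t, a <= t <= b -> exists2 d, 0 < d & forall q t', Near d q ->
       `|t - t'| < d -> a <= t' <= b -> Good q t') ->
  exists2 d, 0 < d & forall q, Near d q -> forall t, a <= t <= b -> Good q t.
Proof.
move=> Nmono ab Hloc.
pose E := [set t : R | a <= t <= b /\ exists2 d, 0 < d &
   forall q, Near d q -> forall t', a <= t' <= t -> Good q t']%classic.
have Ea : E a.
  split; first by rewrite lexx ab.
  have [|d d0 Hd] := Hloc a; first by rewrite lexx ab.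
  exists d => // q Nq t' /andP[h1 h2].
  have -> : t' = a by apply/eqP; rewrite eq_le h1 h2.
  by apply: Hd => //; [rewrite subrr normr0 | rewrite lexx ab].
have ubE : ubound E b by move=> t [/andP[_ ?] _].
have hsE : has_sup E by split; [exists a | exists b].
set M := sup E.
have aM : a <= M by exact: (sup_upper_bound hsE) Ea.
have Mb : M <= b by apply: ge_sup => //; exists a.
have [|dM dM0 HM] := Hloc M; first by rewrite aM Mb.
have [t Et Mt] := sup_adherent dM0 hsE.
rewrite -/M in Mt.
have tM : t <= M by exact: (sup_upper_bound hsE) Et.
case: Et => /andP[hat tb] [dt dt0 Ht].
pose t2 := Num.min b (M + dM / 2).
have Et2 : E t2.
  split.
    apply/andP; split; last by rewrite ge_min lexx.
    rewrite le_min ab /=; lra.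
  exists (Num.min dt dM); first by rewrite lt_min dt0 dM0.
  move=> q Nq t' /andP[hhat' t't2].
  have [t't|tt'] := leP t' t.
    apply: Ht; first by apply: Nmono Nq; rewrite ge_min lexx.
    by rewrite hhat' t't.
  apply: HM; first by apply: Nmono Nq; rewrite ge_min lexx orbT.
    move: t't2; rewrite le_min => /andP[h1 h2].
    rewrite ltr_norml; apply/andP; split; lra.
  move: t't2; rewrite le_min => /andP[h1 h2]. by rewrite hhat' h1.
have t2M : t2 <= M by exact: (sup_upper_bound hsE) Et2.
have t2b : t2 = b.
  move: t2M; rewrite /t2 ge_min => /orP[h|h]; last by lra.
  apply/eqP; rewrite eq_le ge_min lexx /= le_min lexx /=; lra.
case: Et2 => _ [d d0 Hd]; exists d => // q Nq t' /andP[h1 h2].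
apply: (Hd q Nq); rewrite t2b h1 h2 //.
Qed.
End Tube.
Section Topo.
Local Open Scope ring_scope.

Lemma cont_comp (X Y Z : Defs.space) (f : carrier X -> carrier Y) (g : carrier Y -> carrier Z) :
  cont f -> cont g -> cont (g \o f).
Proof.
move=> [fp fo] [gp go]; split=> [x px|U oU]; first by apply: gp; apply: fp.
have [W1 oW1 H1] := go U oU; have [W2 oW2 H2] := fo W1 oW1.
exists W2 => // x px; rewrite H2 // H1 //; exact: fp.
Qed.

Lemma cont_ext (X Y : Defs.space) (f g : carrier X -> carrier Y) :
  (forall x, pts x -> f x = g x) -> cont f -> cont g.
Proof.
move=> e [fp fo]; split=> [x px|U oU]; first by rewrite -e //; apply: fp.
have [W oW H] := fo U oU; exists W => // x px; rewrite -e //; exact: H.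
Qed.

Lemma cont_pair (X Y : Defs.space) (g : carrier X -> carrier Y) :
  cont g -> @cont (prodI X) (prodI Y) (fun z => (g z.1, z.2)).
Proof.
move=> [gp go]; split=> [[x t] /= [px ut]|W oW]; first by split=> //; apply: gp.
exists (fun z => W (g z.1, z.2)) => //.
move=> x t px ut /= Wgx.
have [U0 [oU0 U0x [e e0 He]]] := oW (g x) t (gp _ px) ut Wgx.
have [U oU HU] := go U0 oU0.
exists U; split => //; first by rewrite HU.
exists e => // x' t' px' Ux' ut' lt; apply: He => //; [exact: gp | by rewrite -HU].
Qed.

Lemma cont_rev (X : Defs.space) :
  @cont (prodI X) (prodI X) (fun z => (z.1, 1 - z.2)).
Proof.
split=> [[x t] /= [px /andP[t0 t1]]|W oW]; first by split=> //; apply/andP; split; lra.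
exists (fun z => W (z.1, 1 - z.2)) => //.
move=> x t px /andP[t0 t1] /= Wx.
have [|U [oU Ux [e e0 He]]] := oW x (1 - t) px _ Wx; first by apply/andP; split; lra.
exists U; split => //; exists e => // x' t' px' Ux' /andP[t0' t1'] lt.
apply: He => //; first by apply/andP; split; lra.
have -> : 1 - t - (1 - t') = t' - t by ring.
by rewrite distrC.
Qed.

Lemma real_open_sect (V : choiceType) (S : fposet V) (c : R) (W : ({fset V} -> R) * R -> Prop) :
  unit_interval c -> @opn (prodI (realization S)) W -> real_open S (fun p => W (p, c)).
Proof.
move=> uc oW ch p chp pp sp Wp.
have [U [oU Up [e e0 He]]] := oW p c pp uc Wp.
have [d d0 Hd] := oU ch p chp pp sp Up.
exists d => // q pq sq nq; apply: He => //; first by apply: Hd.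
by rewrite subrr normr0.
Qed.

Lemma cont_sect (V : choiceType) (S : fposet V) (c : R) :
  unit_interval c -> @cont (realization S) (prodI (realization S)) (fun p => (p, c)).
Proof.
move=> uc; split=> [p pp|W oW]; first by split.
exists (fun p => W (p, c)) => //; exact: real_open_sect.
Qed.

Lemma real_openI (V : choiceType) (S : fposet V) U1 U2 :
  real_open S U1 -> real_open S U2 -> real_open S (fun p => U1 p /\ U2 p).
Proof.
move=> o1 o2 ch p chp pp sp [U1p U2p].
have [d1 d10 H1] := o1 ch p chp pp sp U1p.
have [d2 d20 H2] := o2 ch p chp pp sp U2p.
exists (Num.min d1 d2); first by rewrite lt_min d10 d20.
move=> q pq sq nq; split; [apply: H1 | apply: H2] => // x xc;
 apply: lt_le_trans (nq x xc) _; by rewrite ge_min lexx ?orbT.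
Qed.

Definition concat (A B : Type) (H1 H2 : A * R -> B) (z : A * R) : B :=
  if z.2 <= 2^-1 then H1 (z.1, 2 * z.2) else H2 (z.1, 2 * z.2 - 1).

Lemma cont_concat (V : choiceType) (S : fposet V) (Y : Defs.space)
  (H1 H2 : ({fset V} -> R) * R -> carrier Y) :
  @cont (prodI (realization S)) Y H1 -> @cont (prodI (realization S)) Y H2 ->
  (forall p, real_pt S p -> H1 (p, 1) = H2 (p, 0)) ->
  @cont (prodI (realization S)) Y (concat H1 H2).
Proof.
move=> [p1 o1] [p2 o2] e12; split.
  move=> [p t] [/= pp /andP[t0 t1]]; rewrite /concat /=.
  case: ifP => ht; [apply: p1|apply: p2]; split => //=; apply/andP; split.
  - lra.
  - lra.
  - move/negbT: ht; rewrite -ltNge => ht; lra.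
  - lra.
move=> W oW.
have [W1 oW1 HW1] := o1 W oW; have [W2 oW2 HW2] := o2 W oW.
exists (fun z => W (concat H1 H2 z)) => //.
move=> p t pp /andP[t0 t1]; rewrite /concat /= => Wz.
have [tlt|tgt|teq] := ltgtP t (2^-1).
- rewrite ltW // in Wz.
  have uz0 : unit_interval (2 * t) by apply/andP; split; lra.
  have w1 : W1 (p, 2 * t) by apply/(HW1 (p, 2 * t)) => //.
  have [U [oU Up [e e0 He]]] := oW1 p (2 * t) pp uz0 w1.
  exists U; split => //; exists (Num.min (e / 2) (2^-1 - t)).
    rewrite lt_min; apply/andP; split; lra.
  move=> p' t' pp' Up' /andP[t0' t1'] /= lt.
  move: lt; rewrite lt_min !ltr_norml => /andP[/andP[l1 l1'] /andP[l2 l2']].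
  have -> : (t' <= 2^-1) = true by apply/idP; lra.
  have uz : unit_interval (2 * t') by apply/andP; split; lra.
  have := He p' (2 * t') pp' Up' uz; rewrite -HW1; last by split.
  apply; rewrite ltr_norml; apply/andP; split; lra.
- rewrite leNgt tgt /= in Wz.
  have uz0 : unit_interval (2 * t - 1) by apply/andP; split; lra.
  have w1 : W2 (p, 2 * t - 1) by apply/(HW2 (p, 2 * t - 1)) => //.
  have [U [oU Up [e e0 He]]] := oW2 p (2 * t - 1) pp uz0 w1.
  exists U; split => //; exists (Num.min (e / 2) (t - 2^-1)).
    rewrite lt_min; apply/andP; split; lra.
  move=> p' t' pp' Up' /andP[t0' t1'] /= lt.
  move: lt; rewrite lt_min !ltr_norml => /andP[/andP[l1 l1'] /andP[l2 l2']].
  have -> : (t' <= 2^-1) = false by apply/negbTE; rewrite -ltNge; lra.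
  have uz : unit_interval (2 * t' - 1) by apply/andP; split; lra.
  have := He p' (2 * t' - 1) pp' Up' uz; rewrite -HW2; last by split.
  apply; rewrite ltr_norml; apply/andP; split; lra.
- subst t; rewrite lexx in Wz.
  have h1 : 2 * 2^-1 = 1 :> R by field.
  rewrite h1 in Wz.
  have u1 : unit_interval (1 : R) by apply/andP; split; lra.
  have u0 : unit_interval (0 : R) by apply/andP; split; lra.
  have w1 : W1 (p, 1) by apply/(HW1 (p, 1) (conj pp u1)).
  have w2 : W2 (p, 0) by apply/(HW2 (p, 0) (conj pp u0)) => /=; rewrite -e12.
  have [U1 [oU1 U1p [e1 e10 He1]]] := oW1 p 1 pp u1 w1.
  have [U2 [oU2 U2p [e2 e20 He2]]] := oW2 p 0 pp u0 w2.
  exists (fun q => U1 q /\ U2 q); split => //; first exact: real_openI.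
  exists (Num.min e1 e2 / 2).
    have : 0 < Num.min e1 e2 by rewrite lt_min e10 e20.
    lra.
  move=> p' t' pp' [Up1 Up2] /andP[t0' t1'] /= lt.
  have m1 : Num.min e1 e2 <= e1 by rewrite ge_min lexx.
  have m2 : Num.min e1 e2 <= e2 by rewrite ge_min lexx orbT.
  move: lt; rewrite ltr_norml => /andP[l1 l1'].
  case: ifP => ht.
    have uz : unit_interval (2 * t') by apply/andP; split; lra.
    have := He1 p' (2 * t') pp' Up1 uz; rewrite -HW1; last by split.
    apply; rewrite ltr_norml; apply/andP; split; lra.
  move/negbT: ht; rewrite -ltNge => ht.
  have uz : unit_interval (2 * t' - 1) by apply/andP; split; lra.
  have := He2 p' (2 * t' - 1) pp' Up2 uz; rewrite -HW2; last by split.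
  apply; rewrite ltr_norml; apply/andP; split; lra.
Qed.
End Topo.
Section Sums.
Local Open Scope ring_scope.
Local Open Scope fset_scope.
Variable V : choiceType.
Implicit Types (p q : {fset V} -> R) (c : seq {fset V}).

Definition ex_supp p := exists c, uniq c /\ supp_in c p.

Lemma sum_supp_eq c1 c2 p (F : {fset V} -> R) : uniq c1 -> uniq c2 ->
  supp_in c1 p -> supp_in c2 p -> (forall x, p x = 0 -> F x = 0) ->
  \sum_(x <- c1) F x = \sum_(x <- c2) F x.
Proof.
move=> u1 u2 s1 s2 HF.
have E c : supp_in c p ->
    \sum_(x <- c) F x = \sum_(x <- filter (fun x => p x != 0) c) F x.
  move=> _; rewrite big_filter [RHS]big_mkcond; apply: eq_bigr => x _.
  by case: (eqVneq (p x) 0) => h //=; rewrite HF.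
rewrite (E c1 s1) (E c2 s2); apply: perm_big; apply: uniq_perm; rewrite ?filter_uniq //.
move=> x; rewrite !mem_filter; case: (eqVneq (p x) 0) => //= h.
case: (boolP (x \in c1)) => h1; case: (boolP (x \in c2)) => h2 //.
- by rewrite s2 ?eqxx in h.
- by rewrite s1 ?eqxx in h.
Qed.

Lemma supp_listP p : ex_supp p -> uniq (support_list p) /\ supp_in (support_list p) p.
Proof. move=> h; exact: (xgetPex [::] h). Qed.

Lemma SP_chain p c (F : {fset V} -> R) : uniq c -> supp_in c p ->
  (forall x, p x = 0 -> F x = 0) ->
  \sum_(x <- support_list p) F x = \sum_(x <- c) F x.
Proof.
move=> u s HF; have [u' s'] : uniq (support_list p) /\ supp_in (support_list p) p.
  by apply: supp_listP; exists c.
exact: (sum_supp_eq u' u s' s HF).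
Qed.

Lemma sum_pick (L : seq {fset V}) a (F : {fset V} -> R) : uniq L ->
  \sum_(z <- L) (if a == z then F z else 0) = if a \in L then F a else 0.
Proof.
move=> uL; case: ifP => aL.
  rewrite (bigD1_seq a) //= eqxx big1 ?addr0 // => z /negbTE.
  by rewrite eq_sym => ->.
rewrite big1_seq // => z /andP[_ zL]; case: eqP => // az.
by rewrite az zL in aL.
Qed.

Lemma sum_nz (I : eqType) (L : seq I) (F : I -> R) :
  \sum_(z <- L) F z != 0 -> exists2 z, z \in L & F z != 0.
Proof.
move=> h; case: (boolP (has (fun z => F z != 0) L)) => [/hasP[z zL Fz]|hn].
  by exists z.
move/negP: h; case; apply/eqP; rewrite big1_seq // => z /andP[_ zL].
apply/eqP; apply/negPn; apply: contra hn => Fz; apply/hasP; by exists z.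
Qed.

Lemma sum_ge_term (I : eqType) (L : seq I) (F : I -> R) a : uniq L -> a \in L ->
  (forall z, z \in L -> 0 <= F z) -> F a <= \sum_(z <- L) F z.
Proof.
move=> uL aL h; rewrite (bigD1_seq a) //= lerDl.
by rewrite big_seq_cond; apply: sumr_ge0 => z /andP[zL _]; apply: h.
Qed.
End Sums.
Section Al.
Local Open Scope ring_scope.
Definition mx0 (u : R) := if 0 <= u then u else 0.
Definition al (a l t : R) := if a <= mx0 (t - l) then a else mx0 (t - l).

Lemma nrm (u : R) : - `|u| <= u /\ u <= `|u|.
Proof. split; last exact: ler_norm. by rewrite lerNl -normrN ler_norm. Qed.

Lemma mx0_ge0 u : 0 <= mx0 u.
Proof. rewrite /mx0; case: ifP => //. Qed.

Lemma mx0_lip u u' : `|mx0 u - mx0 u'| <= `|u - u'|.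
Proof.
have [h1 h2] := nrm (u - u').
rewrite /mx0 ler_norml; case: (lerP 0 u) => a; case: (lerP 0 u') => b;
 apply/andP; split; lra.
Qed.

Lemma al0 l t : al 0 l t = 0.
Proof. by rewrite /al mx0_ge0. Qed.

Lemma al_ge0 a l t : 0 <= a -> 0 <= al a l t.
Proof. by rewrite /al => a0; case: ifP => // _; apply: mx0_ge0. Qed.

Lemma al_le a l t : al a l t <= a.
Proof. rewrite /al; case: ifP => // /negbT; rewrite -ltNge => h; exact: ltW. Qed.

Lemma al_pos a l t : 0 < al a l t -> l < t.
Proof.
rewrite /al /mx0; case: (lerP 0 (t - l)) => h2 /=;
 [case: (lerP a (t - l)) => h1 ? | case: (lerP a 0) => h1 ?]; lra.
Qed.

Lemma al_ltp a l t : al a l t < a -> t - l < a.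
Proof.
rewrite /al /mx0; case: (lerP 0 (t - l)) => h2 /=;
 [case: (lerP a (t - l)) => h1 ? | case: (lerP a 0) => h1 ?]; lra.
Qed.

Lemma al_full a l t : a <= t - l -> al a l t = a.
Proof.
rewrite /al /mx0 => h; case: (lerP 0 (t - l)) => h2 /=;
 [case: (lerP a (t - l)) => h1 | case: (lerP a 0) => h1] => //; lra.
Qed.

Lemma al_zero a l t : 0 <= a -> t - l <= 0 -> al a l t = 0.
Proof.
rewrite /al /mx0 => a0 h; case: (lerP 0 (t - l)) => h2 /=;
 [case: (lerP a (t - l)) => h1 | case: (lerP a 0) => h1] => //;
 apply/eqP; rewrite eq_le; apply/andP; split; lra.
Qed.

Lemma al_lip a l t a' l' t' :
  `|al a l t - al a' l' t'| <= `|a - a'| + `|l - l'| + `|t - t'|.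
Proof.
have m := mx0_lip (t - l) (t' - l').
have [n1 n2] := nrm (a - a'); have [n3 n4] := nrm (l - l').
have [n5 n6] := nrm (t - t'); have [n7 n8] := nrm (t - l - (t' - l')).
have [n9 n10] := nrm (mx0 (t - l) - mx0 (t' - l')).
move: m n7 n8 n9 n10; set m1 := mx0 (t - l); set m2 := mx0 (t' - l') => m n7 n8 n9 n10.
have k : `|t - l - (t' - l')| <= `|t - t'| + `|l - l'|.
  have -> : t - l - (t' - l') = (t - t') - (l - l') by ring.
  exact: ler_normB.
rewrite /al -/m1 -/m2 ler_norml.
case: (lerP a m1) => a1; case: (lerP a' m2) => b; apply/andP; split; lra.
Qed.
End Al.
Section PrismDefs.
Local Open Scope fset_scope.
Local Open Scope ring_scope.
Variable V : choiceType.
Implicit Types (p q : {fset V} -> R) (c : seq {fset V}).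

Definition cumC c p x := \sum_(z <- c) (if z `<=` x then p z else 0).
Definition Al c p s x := al (p x) (cumC c p x - p x) (1 - s).
Definition tm (f g : {fset V} -> {fset V}) c p s y x :=
  (if f x == y then Al c p s x else 0) + (if g x == y then p x - Al c p s x else 0).
Definition HC f g c p s y := \sum_(x <- c) tm f g c p s y x.
Definition Hprism f g p s := HC f g (support_list p) p s.

Lemma rmap_chain (f : {fset V} -> {fset V}) p c : uniq c -> supp_in c p ->
  realize_map f p = fun y => \sum_(x <- c) (if f x == y then p x else 0).
Proof.
move=> u s; apply: funext => y; rewrite /realize_map big_mkcond.
by apply: SP_chain => // x ->; case: ifP.
Qed.

Lemma tm0 f g c p s y x : p x = 0 -> tm f g c p s y x = 0.
Proof. by move=> h; rewrite /tm /Al h al0 subrr; case: ifP; case: ifP; rewrite ?addr0. Qed.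

Lemma Hprism_chain f g p c s : uniq c -> supp_in c p ->
  Hprism f g p s = HC f g c p s.
Proof.
move=> u sp; have [u' s'] := supp_listP (ex_intro _ c (conj u sp)).
have ec x : cumC (support_list p) p x = cumC c p x.
  by apply: (sum_supp_eq u' u s' sp) => z ->; case: ifP.
apply: funext => y; rewrite /Hprism /HC.
rewrite (sum_supp_eq u' u s' sp (F := tm f g (support_list p) p s y)); last exact: tm0.
by apply: eq_bigr => x _; rewrite /tm /Al ec.
Qed.

Lemma tm_ge0 f g c p s y x : 0 <= p x -> 0 <= tm f g c p s y x.
Proof.
move=> px; rewrite /tm; apply: addr_ge0; case: ifP => _ //; rewrite /Al.
  exact: al_ge0.
by rewrite subr_ge0 al_le.
Qed.

Lemma HC_ge0 f g c p s y : (forall x, 0 <= p x) -> 0 <= HC f g c p s y.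
Proof. by move=> h; apply: sumr_ge0 => x _; apply: tm_ge0. Qed.

Definition wit (f g : {fset V} -> {fset V}) c p s y := exists2 x, x \in c &
  ((f x = y /\ cumC c p x - p x < 1 - s) \/ (g x = y /\ 1 - s < cumC c p x)).

Lemma HC_wit f g c p s y : (forall x, 0 <= p x) -> HC f g c p s y != 0 -> wit f g c p s y.
Proof.
move=> p0 /sum_nz [x xc n]; exists x => //.
move: n; rewrite /tm /Al.
set A := al (p x) (cumC c p x - p x) (1 - s).
have a0 : 0 <= A by apply: al_ge0.
have a1 : A <= p x by apply: al_le.
have L1 : 0 < A -> cumC c p x - p x < 1 - s by move/al_pos.
have L2 : A < p x -> 1 - s < cumC c p x by move/al_ltp => h; lra.
case: (eqVneq (f x) y) => hf; case: (eqVneq (g x) y) => hg /=.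
- rewrite addrC subrK => hp.
  case: (eqVneq A 0) => hA.
    right; split => //; apply: L2; rewrite hA lt_def hp p0 //.
  left; split => //; apply: L1; by rewrite lt_def hA a0.
- rewrite addr0 => hA; left; split => //; apply: L1; by rewrite lt_def hA a0.
- rewrite add0r => hB; right; split => //; apply: L2.
  rewrite lt_def a1 andbT; apply: contra hB => /eqP ->; by rewrite subrr.
- by rewrite addr0 eqxx.
Qed.

Lemma Lo_ge_cum c p x x' : uniq c -> (forall z, 0 <= p z) -> x \in c ->
  x' `<=` x -> x' != x -> cumC c p x' <= cumC c p x - p x.
Proof.
move=> u p0 xc sub ne; rewrite /cumC (bigD1_seq x) //= (bigD1_seq x xc u) /=.
rewrite fsubset_refl.
have -> : (x `<=` x') = false.
  apply/negP => h; move/negP: ne; apply; by rewrite eqEfsubset sub h.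
rewrite add0r addrC addrK; apply: ler_sum => z _.
case: ifP => h1; last by case: ifP.
by rewrite (fsubset_trans h1 sub).
Qed.

Definition sep c p s q s' := forall x x', x \in c -> x' \in c -> x' `<=` x -> x' != x ->
  cumC c p x - p x < 1 - s -> 1 - s' < cumC c q x' -> False.

Lemma self_sep c p s : uniq c -> (forall z, 0 <= p z) -> sep c p s p s.
Proof.
move=> u p0 x x' xc x'c sub ne h1 h2.
have := Lo_ge_cum u p0 xc sub ne; lra.
Qed.

End PrismDefs.

Section Prism.
Local Open Scope fset_scope.
Local Open Scope ring_scope.
Variables (V : choiceType) (S T : fposet V) (f g : {fset V} -> {fset V}).
Hypothesis fS : forall x, S x -> T (f x).
Hypothesis gS : forall x, S x -> T (g x).
Hypothesis fmono : forall x y, S x -> S y -> x `<=` y -> f x `<=` f y.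
Hypothesis gmono : forall x y, S x -> S y -> x `<=` y -> g x `<=` g y.
Hypothesis fg : forall x, S x -> f x `<=` g x.
Implicit Types (p q : {fset V} -> R) (c : seq {fset V}).

Lemma comp_wit c p s q s' y1 y2 : (forall x, x \in c -> S x) ->
  (forall x y, x \in c -> y \in c -> (x `<=` y) || (y `<=` x)) ->
  wit f g c p s y1 -> wit f g c q s' y2 -> sep c p s q s' -> sep c q s' p s ->
  (y1 `<=` y2) || (y2 `<=` y1).
Proof.
move=> cS cC [x1 x1c h1] [x2 x2c h2] s12 s21.
have S1 := cS _ x1c; have S2 := cS _ x2c.
case: h1 => [[<- l1]|[<- l1]]; case: h2 => [[<- l2]|[<- l2]].
- by case/orP: (cC _ _ x1c x2c) => h; [rewrite (fmono S1 S2 h) | rewrite (fmono S2 S1 h) orbT].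
- case/orP: (cC _ _ x1c x2c) => h.
    by rewrite (fsubset_trans (fmono S1 S2 h) (fg S2)).
  case: (eqVneq x2 x1) => [e|ne]; first by subst; rewrite (fg S1).
  by case: (s12 _ _ x1c x2c h ne l1 l2).
- case/orP: (cC _ _ x1c x2c) => h.
    case: (eqVneq x1 x2) => [e|ne]; first by subst; rewrite (fg S1) orbT.
    by case: (s21 _ _ x2c x1c h ne l2 l1).
  by rewrite (fsubset_trans (fmono S2 S1 h) (fg S1)) orbT.
- by case/orP: (cC _ _ x1c x2c) => h; [rewrite (gmono S1 S2 h) | rewrite (gmono S2 S1 h) orbT].
Qed.

Definition E0 c := map f c ++ map g c.

Lemma wit_E0 c p s y : wit f g c p s y -> y \in E0 c.
Proof.
case=> x xc [[<- _]|[<- _]]; rewrite mem_cat; apply/orP; [left|right];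
 exact: map_f.
Qed.

Lemma sum_pick_c (L : seq {fset V}) a (k : R) : uniq L ->
  \sum_(z <- L) (if a == z then k else 0) = if a \in L then k else 0.
Proof. exact: (@sum_pick V L a (fun _ => k)). Qed.

Lemma HC_sum c p s (L : seq {fset V}) : uniq c -> (forall x, 0 <= p x) -> uniq L ->
  (forall y, HC f g c p s y != 0 -> y \in L) ->
  \sum_(y <- L) HC f g c p s y = \sum_(x <- c) p x.
Proof.
move=> u p0 uL hL; rewrite /HC exchange_big /=; apply: eq_big_seq => x xc.
rewrite /tm big_split /= !sum_pick_c //.
set A := Al c p s x.
have a0 : 0 <= A by apply: al_ge0.
have a1 : A <= p x by apply: al_le.
have eA : (if f x \in L then A else 0) = A.
  case: ifP => // h; case: (eqVneq A 0) => // nA; rewrite hL // in h.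
  apply: lt0r_neq0; apply: lt_le_trans (sum_ge_term (F := tm f g c p s (f x)) u xc _); last first.
    by move=> z _; apply: tm_ge0.
  rewrite /tm eqxx -/A; apply: (@lt_le_trans _ _ A); first by rewrite lt_def nA a0.
  by rewrite lerDl; case: ifP => // _; rewrite subr_ge0.
have eB : (if g x \in L then p x - A else 0) = p x - A.
  case: ifP => // h; case: (eqVneq (p x - A) 0) => // nA; rewrite hL // in h.
  apply: lt0r_neq0; apply: lt_le_trans (sum_ge_term (F := tm f g c p s (g x)) u xc _); last first.
    by move=> z _; apply: tm_ge0.
  rewrite /tm eqxx -/A; apply: (@lt_le_trans _ _ (p x - A)).
    by rewrite lt_def nA subr_ge0 a1.
  by rewrite lerDr; case: ifP.
by rewrite eA eB addrC subrK.
Qed.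

Lemma HC_real c p s : is_chain S c -> supp_in c p -> (forall x, 0 <= p x) ->
  \sum_(x <- c) p x = 1 -> real_pt T (HC f g c p s).
Proof.
move=> [u cS cC] sp p0 s1.
pose L := undup (filter (fun y => HC f g c p s y != 0) (E0 c)).
have inL y : HC f g c p s y != 0 -> y \in L.
  by move=> h; rewrite mem_undup mem_filter h /=; exact: (wit_E0 (HC_wit p0 h)).
exists L; split.
- split; first exact: undup_uniq.
  + move=> y; rewrite mem_undup mem_filter => /andP[_].
    rewrite mem_cat => /orP[] /mapP [x xc ->]; [apply: fS | apply: gS]; exact: cS.
  + move=> y1 y2; rewrite !mem_undup !mem_filter => /andP[h1 _] /andP[h2 _].
    apply: (comp_wit cS cC (HC_wit p0 h1) (HC_wit p0 h2)); exact: self_sep.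
- move=> y yL; apply/eqP; apply: contraNT yL; exact: inL.
- by move=> y; apply: HC_ge0.
- by rewrite (HC_sum u p0 (undup_uniq _) inL).
Qed.

Lemma cum_le1 c p x : (forall z, 0 <= p z) -> \sum_(z <- c) p z = 1 -> cumC c p x <= 1.
Proof. move=> p0 s1; rewrite -s1; apply: ler_sum => z _; by case: ifP. Qed.

Lemma cum_gep c p x : uniq c -> supp_in c p -> (forall z, 0 <= p z) -> p x <= cumC c p x.
Proof.
move=> u sp p0; case: (boolP (x \in c)) => xc.
  have := sum_ge_term (F := fun z => if z `<=` x then p z else 0) u xc.
  rewrite fsubset_refl; apply => z _; by case: ifP.
rewrite sp //; apply: sumr_ge0 => z _; by case: ifP.
Qed.

Lemma HC_0 c p : (forall z, 0 <= p z) -> \sum_(z <- c) p z = 1 ->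
  HC f g c p 0 = fun y => \sum_(x <- c) (if f x == y then p x else 0).
Proof.
move=> p0 s1; apply: funext => y; apply: eq_bigr => x _.
rewrite /tm /Al al_full ?subrr; last by have := cum_le1 x p0 s1; lra.
by case: ifP; case: ifP; rewrite ?addr0.
Qed.

Lemma HC_1 c p : uniq c -> supp_in c p -> (forall z, 0 <= p z) ->
  HC f g c p 1 = fun y => \sum_(x <- c) (if g x == y then p x else 0).
Proof.
move=> u sp p0; apply: funext => y; apply: eq_bigr => x _.
rewrite /tm /Al al_zero ?subr0 //; last by have := cum_gep x u sp p0; lra.
by case: ifP; case: ifP; rewrite ?add0r.
Qed.

Lemma HC_fix c p s : (forall x, x \in c -> p x != 0 -> f x = x /\ g x = x) ->
  HC f g c p s = fun y => \sum_(x <- c) (if x == y then p x else 0).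
Proof.
move=> h; apply: funext => y; apply: eq_big_seq => x xc.
case: (eqVneq (p x) 0) => hp; first by rewrite tm0 // hp; case: ifP.
rewrite /tm; have [-> ->] := h x xc hp; case: ifP => _; last by rewrite addr0.
by rewrite addrC subrK.
Qed.

End Prism.
Section Unif.
Local Open Scope ring_scope.
Lemma fin_unif (I : eqType) (l : seq I) (Pr : I -> R -> Prop) :
  (forall i e e', 0 < e' -> e' <= e -> Pr i e -> Pr i e') ->
  (forall i, i \in l -> exists2 e, 0 < e & Pr i e) ->
  exists2 e, 0 < e & forall i, i \in l -> Pr i e.
Proof.
move=> mono; elim: l => [|i l IH] h; first by exists 1.
have [e1 e10 H1] := h i (mem_head _ _).
have [|e2 e20 H2] := IH; first by move=> j jl; apply: h; rewrite inE jl orbT.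
exists (Num.min e1 e2); first by rewrite lt_min e10 e20.
move=> j; rewrite inE => /orP[/eqP ->|jl].
  by apply: mono H1; rewrite ?lt_min ?e10 ?e20 // ge_min lexx.
by apply: mono (H2 j jl); rewrite ?lt_min ?e10 ?e20 // ge_min lexx orbT.
Qed.

Lemma norm_sum_bound (I : eqType) (c : seq I) (F : I -> R) (B : R) :
  (forall x, x \in c -> `|F x| <= B) -> `|\sum_(x <- c) F x| <= B *+ size c.
Proof.
elim: c => [|x c IH] h; first by rewrite big_nil normr0.
rewrite big_cons /= mulrS; apply: le_trans (ler_normD _ _) _.
apply: lerD; first by apply: h; rewrite mem_head.
by apply: IH => z zc; apply: h; rewrite inE zc orbT.
Qed.
End Unif.

Section StepA.
Local Open Scope fset_scope.
Local Open Scope ring_scope.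
Variables (V : choiceType) (S T : fposet V) (f g : {fset V} -> {fset V}).
Hypothesis fS : forall x, S x -> T (f x).
Hypothesis gS : forall x, S x -> T (g x).
Hypothesis fmono : forall x y, S x -> S y -> x `<=` y -> f x `<=` f y.
Hypothesis gmono : forall x y, S x -> S y -> x `<=` y -> g x `<=` g y.
Hypothesis fg : forall x, S x -> f x `<=` g x.
Implicit Types (p q : {fset V} -> R) (c : seq {fset V}).

Lemma real_sum c p : real_pt S p -> uniq c -> supp_in c p ->
  (forall x, 0 <= p x) /\ \sum_(x <- c) p x = 1.
Proof.
move=> [c' [[u' _ _] sp' p0 s1]] u sp; split => //.
by rewrite -s1; apply: (sum_supp_eq u u' sp sp').
Qed.

Lemma cum_diff c p q x :
  `|cumC c p x - cumC c q x| <= \sum_(z <- c) `|p z - q z|.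
Proof.
rewrite /cumC -sumrB; apply: le_trans (ler_norm_sum _ _ _) _.
apply: ler_sum => z _; case: ifP => _ //; by rewrite subrr normr0.
Qed.

Lemma pt_diff c p q x : uniq c -> x \in c ->
  `|p x - q x| <= \sum_(z <- c) `|p z - q z|.
Proof. move=> u xc; apply: (sum_ge_term (F := fun z => `|p z - q z|) u xc) => z _. by []. Qed.

Lemma tm_diff c p q s s' y x : uniq c -> x \in c ->
  `|tm f g c p s y x - tm f g c q s' y x| <= 9 * (\sum_(z <- c) `|p z - q z| + `|s - s'|).
Proof.
move=> u xc.
have hc := cum_diff c p q x; have hp := pt_diff p q u xc.
have hD : 0 <= \sum_(z <- c) `|p z - q z| by apply: sumr_ge0.
set D := \sum_(z <- c) `|p z - q z| in hc hp hD *.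
clearbody D.
have hs : 0 <= `|s - s'| by [].
have hl := al_lip (p x) (cumC c p x - p x) (1 - s) (q x) (cumC c q x - q x) (1 - s').
have e1 : `|cumC c p x - p x - (cumC c q x - q x)| <= `|cumC c p x - cumC c q x| + `|p x - q x|.
  have -> : cumC c p x - p x - (cumC c q x - q x) = (cumC c p x - cumC c q x) - (p x - q x) by ring.
  exact: ler_normB.
have e2 : `|1 - s - (1 - s')| = `|s - s'|.
  have -> : 1 - s - (1 - s') = - (s - s') by ring.
  by rewrite normrN.
rewrite e2 in hl.
rewrite /tm /Al.
set A := al (p x) (cumC c p x - p x) (1 - s) in hl *.
set B := al (q x) (cumC c q x - q x) (1 - s') in hl *.
clearbody A B.
have hA : `|A - B| <= 4 * (D + `|s - s'|) by lra.
have hAB : `|p x - A - (q x - B)| <= 5 * (D + `|s - s'|).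
  have -> : p x - A - (q x - B) = (p x - q x) - (A - B) by ring.
  apply: le_trans (ler_normB _ _) _; lra.
case: ifP => _; case: ifP => _; rewrite ?addr0 ?add0r ?subr0 ?sub0r ?oppr0 ?subrr ?normr0 ?normrN.
- have -> : A + (p x - A) - (B + (q x - B)) = p x - q x by ring.
  lra.
- lra.
- lra.
- lra.
Qed.

Lemma HC_diff c p q s s' y : uniq c ->
  `|HC f g c p s y - HC f g c q s' y| <=
    (9 * (\sum_(z <- c) `|p z - q z| + `|s - s'|)) *+ size c.
Proof.
move=> u; rewrite /HC -sumrB; apply: norm_sum_bound => x xc; exact: tm_diff.
Qed.

End StepA.
Section StepA2.
Local Open Scope fset_scope.
Local Open Scope ring_scope.
Variables (V : choiceType) (S T : fposet V) (f g : {fset V} -> {fset V}).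
Hypothesis fS : forall x, S x -> T (f x).
Hypothesis gS : forall x, S x -> T (g x).
Hypothesis fmono : forall x y, S x -> S y -> x `<=` y -> f x `<=` f y.
Hypothesis gmono : forall x y, S x -> S y -> x `<=` y -> g x `<=` g y.
Hypothesis fg : forall x, S x -> f x `<=` g x.
Implicit Types (p q : {fset V} -> R) (c : seq {fset V}).

Lemma sum_bound (I : eqType) (c : seq I) (F : I -> R) (B : R) :
  (forall x, x \in c -> F x <= B) -> \sum_(x <- c) F x <= B *+ size c.
Proof.
elim: c => [|x c IH] h; first by rewrite big_nil.
rewrite big_cons /= mulrS; apply: lerD; first by apply: h; rewrite mem_head.
by apply: IH => z zc; apply: h; rewrite inE zc orbT.
Qed.

Lemma stepA (W : ({fset V} -> R) -> Prop) c p s :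
  real_open T W -> is_chain S c -> real_pt S p -> supp_in c p -> W (HC f g c p s) ->
  exists2 d, 0 < d & forall q s', real_pt S q -> supp_in c q ->
    (forall x, x \in c -> `|p x - q x| < d) -> `|s - s'| < d -> W (HC f g c q s').
Proof.
move=> oW chc pp sp Wp; have [u cS cC] := chc.
have [p0 s1] := real_sum pp u sp.
have w0r : real_pt T (HC f g c p s) by apply: (HC_real fS gS fmono gmono fg).
pose Ef := seq_fset tt (E0 f g c).
have [e e0 He] : exists2 e, 0 < e & forall Z, Z \in enum_fset (fpowerset Ef) ->
   (is_chain T (enum_fset Z) /\ supp_in (enum_fset Z) (HC f g c p s)) ->
   forall w, real_pt T w -> supp_in (enum_fset Z) w ->
   (forall y, y \in enum_fset Z -> `|HC f g c p s y - w y| < e) -> W w.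
  apply: fin_unif.
    move=> Z e1 e2 e20 e21 H h w wr ws wc; apply: H => // y yZ.
    exact: lt_le_trans (wc y yZ) e21.
  move=> Z _.
  case: (pselect (is_chain T (enum_fset Z) /\ supp_in (enum_fset Z) (HC f g c p s))) => [[hc hs]|hn].
    have [e1 e10 H1] := oW (enum_fset Z) _ hc w0r hs Wp.
    by exists e1 => // _ w wr ws wc; apply: H1.
  by exists 1 => // h; case: hn.
have [dm dm0 Hm] : exists2 d, 0 < d & forall x, x \in c ->
   (cumC c p x - p x < 1 - s -> 2 * d <= 1 - s - (cumC c p x - p x)) /\
   (1 - s < cumC c p x -> 2 * d <= cumC c p x - (1 - s)).
  apply: fin_unif.
    move=> x e1 e2 e20 e21 [h1 h2]; split => h; [have := h1 h|have := h2 h]; lra.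
  move=> x _.
  set m1 := 1 - s - (cumC c p x - p x); set m2 := cumC c p x - (1 - s).
  pose a1 := if 0 < m1 then m1 else 1; pose a2 := if 0 < m2 then m2 else 1.
  have a10 : 0 < a1 by rewrite /a1; case: ifP.
  have a20 : 0 < a2 by rewrite /a2; case: ifP.
  exists (Num.min a1 a2 / 2).
    have : 0 < Num.min a1 a2 by rewrite lt_min a10 a20.
    lra.
  have mi1 : Num.min a1 a2 <= a1 by rewrite ge_min lexx.
  have mi2 : Num.min a1 a2 <= a2 by rewrite ge_min lexx orbT.
  split => h.
    have : a1 = m1 by rewrite /a1 ifT //; rewrite /m1; lra.
    lra.
  have : a2 = m2 by rewrite /a2 ifT //; rewrite /m2; lra.
  lra.
pose K : R := (size c)%:R.
have K0 : 0 <= K by rewrite /K ler0n.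
pose m := Num.min dm (e / (9 * K + 1)).
have m0 : 0 < m by rewrite lt_min dm0 /= divr_gt0 //; lra.
have mdm : m <= dm by rewrite ge_min lexx.
have me : m * (9 * K + 1) <= e.
  rewrite -ler_pdivlMr; last by lra.
  by rewrite ge_min lexx orbT.
exists (m / (K + 1)); first by rewrite divr_gt0 //; lra.
move=> q s' qr sq nq ns.
have [q0 sq1] := real_sum qr u sq.
have hS : \sum_(z <- c) `|p z - q z| <= m / (K + 1) * K.
  apply: le_trans (sum_bound (B := m / (K + 1)) _) _.
    move=> z zc; exact: ltW (nq z zc).
  by rewrite /K mulr_natr.
have eK : m / (K + 1) * K + m / (K + 1) = m.
  by field; lra.
have hS0 : 0 <= \sum_(z <- c) `|p z - q z| by apply: sumr_ge0.
set Sg := \sum_(z <- c) `|p z - q z| in hS hS0.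
have hD : Sg + `|s - s'| < m by lra.
have [n1 n2] := nrm (s - s').
have sepPQ : sep c p s q s'.
  move=> x x' xc x'c sub ne l1 l2.
  have [m1 _] := Hm x xc; have := m1 l1.
  have := Lo_ge_cum u q0 xc sub ne.
  have := cum_diff c p q x; have := pt_diff p q u xc; rewrite -/Sg.
  move=> h1 h2; have [h3 h4] := nrm (p x - q x); have [h5 h6] := nrm (cumC c p x - cumC c q x).
  lra.
have sepQP : sep c q s' p s.
  move=> x x' xc x'c sub ne l1 l2.
  have [_ m2] := Hm x' x'c; have := m2 l2.
  have := Lo_ge_cum u q0 xc sub ne.
  have := cum_diff c p q x'; rewrite -/Sg.
  move=> h1; have [h5 h6] := nrm (cumC c p x' - cumC c q x').
  have := p0 x'; lra.
pose P y := (HC f g c p s y != 0) || (HC f g c q s' y != 0).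
pose Z := seq_fset tt (filter P (E0 f g c)).
have memZ y : (y \in Z) = P y && (y \in E0 f g c) by rewrite seq_fsetE mem_filter.
have witP y : P y -> wit f g c p s y \/ wit f g c q s' y.
  by case/orP => h; [left; apply: HC_wit | right; apply: HC_wit].
have ZE : Z \in enum_fset (fpowerset Ef).
  change (Z \in fpowerset Ef); rewrite fpowersetE; apply/fsubsetP => y.
  by rewrite memZ seq_fsetE => /andP[].
apply: (He Z ZE).
- split; first split.
  + exact: fset_uniq.
  + move=> y; rewrite memZ => /andP[_]; rewrite mem_cat => /orP[] /mapP [x xc ->];
     [apply: fS | apply: gS]; exact: cS.
  + move=> y1 y2; rewrite !memZ => /andP[/witP w1 _] /andP[/witP w2 _].
    have sPP : sep c p s p s by apply: self_sep.
    have sQQ : sep c q s' q s' by apply: self_sep.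
    case: w1 => w1; case: w2 => w2; exact: (comp_wit fmono gmono fg cS cC w1 w2).
  + move=> y yZ; apply/eqP; apply: contraNT yZ => h; rewrite memZ /P h /=.
    exact: (wit_E0 (HC_wit p0 h)).
- by apply: (HC_real fS gS fmono gmono fg).
- move=> y yZ; apply/eqP; apply: contraNT yZ => h; rewrite memZ /P h orbT /=.
  exact: (wit_E0 (HC_wit q0 h)).
- move=> y _; apply: le_lt_trans (HC_diff f g p q s s' y u) _.
  rewrite -/Sg -mulr_natr -/K.
  have : (Sg + `|s - s'|) * (9 * K + 1) < m * (9 * K + 1).
    by rewrite ltr_pM2r //; lra.
  have : 0 <= (Sg + `|s - s'|) by lra.
  move=> h0 h1; have : 9 * (Sg + `|s - s'|) * K <= (Sg + `|s - s'|) * (9 * K + 1).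
    have -> : (Sg + `|s - s'|) * (9 * K + 1) = 9 * (Sg + `|s - s'|) * K + (Sg + `|s - s'|) by ring.
    by rewrite lerDl.
  lra.
Qed.
End StepA2.
Section PrismCont.
Local Open Scope fset_scope.
Local Open Scope ring_scope.
Variables (V : choiceType) (S T : fposet V) (f g : {fset V} -> {fset V}).
Hypothesis fS : forall x, S x -> T (f x).
Hypothesis gS : forall x, S x -> T (g x).
Hypothesis fmono : forall x y, S x -> S y -> x `<=` y -> f x `<=` f y.
Hypothesis gmono : forall x y, S x -> S y -> x `<=` y -> g x `<=` g y.
Hypothesis fg : forall x, S x -> f x `<=` g x.
Implicit Types (p q : {fset V} -> R) (c : seq {fset V}).

Lemma Hprism_real p s : real_pt S p -> real_pt T (Hprism f g p s).
Proof.
move=> pp; have [c [chc sp _ _]] := pp; have [u _ _] := chc.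
have [p0 s1] := real_sum pp u sp.
rewrite (Hprism_chain f g s u sp); exact: (HC_real fS gS fmono gmono fg).
Qed.

Lemma prism_cont :
  @cont (prodI (realization S)) (realization T) (fun z => Hprism f g z.1 z.2).
Proof.
split; first by move=> [p s] [/= pp _]; apply: Hprism_real.
move=> W oW; exists (fun z => W (Hprism f g z.1 z.2)) => //.
move=> p0 s0 pp0 /andP[s00 s01] /= Wp0.
have [c0 [chc0 sp0 _ _]] := pp0; have [u0 _ _] := chc0.
rewrite (Hprism_chain f g s0 u0 sp0) in Wp0.
have [d0 d00 Hd0] := stepA fS gS fmono gmono fg oW chc0 pp0 sp0 Wp0.
pose e := d0 / 2.
have e0 : 0 < e by rewrite /e; lra.
exists (fun p => real_pt S p /\ forall t, unit_interval t -> `|s0 - t| <= e -> W (Hprism f g p t)).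
split.
- move=> c p chc pp sp [_ Up]; have [u _ _] := chc.
  pose a := Num.max 0 (s0 - e); pose b := Num.min 1 (s0 + e).
  have ab : a <= b by rewrite /a /b ge_max !le_min; apply/andP; split; apply/andP; split; lra.
  have inab t : a <= t <= b -> unit_interval t /\ `|s0 - t| <= e.
    rewrite /a /b ge_max le_min => /andP[/andP[h1 h2] /andP[h3 h4]].
    split; first by apply/andP; split.
    rewrite ler_norml; apply/andP; split; lra.
  pose Near := fun d q => real_pt S q /\ supp_in c q /\ forall x, x \in c -> `|p x - q x| < d.
  have hmono : forall d1 d2 q, d2 <= d1 -> Near d2 q -> Near d1 q.
    move=> d1 d2 q h [qr [sq nq]]; split => //; split => // x xc.
    exact: lt_le_trans (nq x xc) h.
  have hloc : forall t, a <= t <= b -> exists2 d, 0 < d & forall q t', Near d q ->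
       `|t - t'| < d -> a <= t' <= b -> W (Hprism f g q t').
    move=> t tab; have [ut st] := inab t tab.
    have Wt := Up t ut st; rewrite (Hprism_chain f g t u sp) in Wt.
    have [d d1 Hd] := stepA fS gS fmono gmono fg oW chc pp sp Wt.
    exists d => // q t' [qr [sq nq]] dt _.
    rewrite (Hprism_chain f g t' u sq); exact: Hd.
  have [d d1 Hd] := tube hmono ab hloc.
  exists d => // q qr sq nq; split => // t /andP[t0 t1] st.
  apply: (Hd q (conj qr (conj sq nq))).
  move: st; rewrite ler_norml => /andP[h1 h2].
  by rewrite /a /b ge_max le_min; apply/andP; split; apply/andP; split; lra.
- split => // t ut st; rewrite (Hprism_chain f g t u0 sp0); apply: Hd0 => //.
    by move=> x _; rewrite subrr normr0.
  by apply: le_lt_trans st _; rewrite /e; lra.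
- exists e => // p' t' pp' [_ Up'] ut' lt; apply: Up' => //; exact: ltW.
Qed.

End PrismCont.
Section Rmap.
Local Open Scope fset_scope.
Local Open Scope ring_scope.
Variables (V : choiceType).
Implicit Types (S T : fposet V) (p q : {fset V} -> R) (c : seq {fset V}).

Lemma rmap_id S p : real_pt S p -> realize_map id p = p.
Proof.
move=> [c [[u _ _] sp _ _]]; rewrite (rmap_chain _ u sp); apply: funext => y.
rewrite (eq_bigr (fun x => if y == x then p x else 0)); last first.
  by move=> x _; rewrite eq_sym.
rewrite sum_pick //; case: ifP => // /negbT h; by rewrite sp.
Qed.

Lemma rmap_nz f p c y : uniq c -> supp_in c p -> realize_map f p y != 0 ->
  exists2 x, x \in c & f x = y /\ p x != 0.
Proof.
move=> u sp; rewrite (rmap_chain _ u sp) => /sum_nz [x xc].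
case: (eqVneq (f x) y) => [<-|_] h; last by rewrite eqxx in h.
by exists x.
Qed.

Lemma rmap_supp f p c : uniq c -> supp_in c p -> supp_in (undup (map f c)) (realize_map f p).
Proof.
move=> u sp y yL; apply/eqP; apply: contraNT yL => /(rmap_nz u sp) [x xc [<- _]].
by rewrite mem_undup; apply: map_f.
Qed.

Lemma rmap_comp f r p c : uniq c -> supp_in c p ->
  realize_map r (realize_map f p) = realize_map (r \o f) p.
Proof.
move=> u sp; have sL := rmap_supp (f := f) u sp.
rewrite (rmap_chain _ (undup_uniq _) sL) (rmap_chain (r \o f) u sp).
apply: funext => z.
rewrite (rmap_chain _ u sp).
have E y : (if r y == z then \sum_(x <- c) (if f x == y then p x else 0) else 0) =
   \sum_(x <- c) (if f x == y then (if r y == z then p x else 0) else 0).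
  case: ifP => _; first by apply: eq_bigr => x _; case: ifP.
  by rewrite big1 // => x _; case: ifP.
rewrite (eq_bigr _ (fun y _ => E y)).
rewrite exchange_big /=; apply: eq_big_seq => x xc.
rewrite (sum_pick (f x) (fun y => if r y == z then p x else 0)) ?undup_uniq //.
by rewrite mem_undup map_f.
Qed.

Lemma prism0 S f g p : real_pt S p -> Hprism f g p 0 = realize_map f p.
Proof.
move=> pp; have [c [[u _ _] sp _ _]] := pp; have [p0 s1] := real_sum pp u sp.
by rewrite (Hprism_chain f g 0 u sp) (HC_0 f g p0 s1) (rmap_chain _ u sp).
Qed.

Lemma prism1 S f g p : real_pt S p -> Hprism f g p 1 = realize_map g p.
Proof.
move=> pp; have [c [[u _ _] sp _ _]] := pp; have [p0 s1] := real_sum pp u sp.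
by rewrite (Hprism_chain f g 1 u sp) (HC_1 f g u sp p0) (rmap_chain _ u sp).
Qed.

Lemma prism_fix S f g p s : real_pt S p ->
  (forall y, p y != 0 -> f y = y /\ g y = y) -> Hprism f g p s = p.
Proof.
move=> pp h; have [c [[u _ _] sp _ _]] := pp.
rewrite (Hprism_chain f g s u sp) (HC_fix s (c := c)); last by move=> x _; apply: h.
by rewrite -(rmap_chain _ u sp) (rmap_id pp).
Qed.

Lemma rmap_real S T f p : (forall x, S x -> T (f x)) ->
  (forall x y, S x -> S y -> x `<=` y -> f x `<=` f y) ->
  real_pt S p -> real_pt T (realize_map f p).
Proof.
move=> fS fm pp; rewrite -(prism0 f f pp).
apply: (Hprism_real fS fS fm fm) => // x _; exact: fsubset_refl.
Qed.

Lemma rmap_cont S T f : (forall x, S x -> T (f x)) ->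
  (forall x y, S x -> S y -> x `<=` y -> f x `<=` f y) ->
  @cont (realization S) (realization T) (realize_map f).
Proof.
move=> fS fm.
have u0 : unit_interval (0 : R) by apply/andP; split; lra.
have := cont_comp (cont_sect S u0) (prism_cont fS fS fm fm (fun x _ => fsubset_refl (f x))).
apply: cont_ext => p pp /=; exact: (@prism0 S f f p pp).
Qed.

End Rmap.
Section Lweq.
Local Open Scope fset_scope.
Local Open Scope ring_scope.
Variables (V : choiceType) (S T : fposet V) (f r : {fset V} -> {fset V}).
Hypothesis fS : forall x, S x -> T (f x).
Hypothesis rT : forall x, T x -> S (r x).
Hypothesis fmono : forall x y, S x -> S y -> x `<=` y -> f x `<=` f y.
Hypothesis rmono : forall x y, T x -> T y -> x `<=` y -> r x `<=` r y.
Hypothesis rf : forall x, S x -> r (f x) = x.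

Lemma rmap_rf p : real_pt S p -> realize_map r (realize_map f p) = p.
Proof.
move=> pp; have [c [[u cS _] sp _ _]] := pp.
rewrite (rmap_comp _ _ u sp) (rmap_chain _ u sp).
transitivity (realize_map id p); last exact: rmap_id pp.
rewrite (rmap_chain _ u sp); apply: funext => y; apply: eq_big_seq => x xc /=.
rewrite rf //; exact: cS.
Qed.

Lemma L_weq (H : ({fset V} -> R) * R -> {fset V} -> R) :
  @cont (prodI (realization T)) (realization T) H ->
  (forall q, real_pt T q -> H (q, 0) = realize_map f (realize_map r q)) ->
  (forall q, real_pt T q -> H (q, 1) = q) ->
  (forall p s, real_pt S p -> unit_interval s -> H (realize_map f p, s) = realize_map f p) ->
  poset_weak_equivalence S T f.
Proof.
move=> Hc H0 H1 Hf.
have fc := rmap_cont fS fmono; have rc := rmap_cont rT rmono.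
split => //; split => //; split => // n x px; split.
- move=> g [gc gb].
  exists (realize_map r \o g).
    split; first exact: cont_comp gc rc.
    by move=> t ut bt /=; rewrite gb // rmap_rf.
  exists (fun z => H (g z.1, z.2)); split.
  + exact: (cont_comp (cont_pair gc) Hc).
  + move=> t ut /=; rewrite H0 //; exact: gc.1.
  + move=> t ut /=; rewrite H1 //; exact: gc.1.
  + move=> t s ut bt us /=; by rewrite gb // Hf // rmap_rf.
- move=> h1 h2 [h1c h1b] [h2c h2b] [G [Gc G0 G1 Gb]].
  exists (realize_map r \o G); split.
  + exact: cont_comp Gc rc.
  + move=> t ut /=; rewrite G0 //= rmap_rf //; exact: h1c.1.
  + move=> t ut /=; rewrite G1 //= rmap_rf //; exact: h2c.1.
  + move=> t s ut bt us /=; rewrite Gb //= rmap_rf //; exact: h1c.1.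
Qed.
End Lweq.
Section Main.
Local Open Scope fset_scope.
Local Open Scope ring_scope.
Variable V : choiceType.
Implicit Types (S T : fposet V) (p q : {fset V} -> R).

Definition fI (t : {fset V}) (Q : V -> Prop) := [fset w in t | `[< Q w >]].

Lemma memI t Q v : (v \in fI t Q) = (v \in t) && `[< Q v >].
Proof. by rewrite /fI !inE. Qed.

Lemma fI_sub t Q : fI t Q `<=` t.
Proof. by apply/fsubsetP => v; rewrite memI => /andP[]. Qed.

Lemma fI_mono t t' Q : t `<=` t' -> fI t Q `<=` fI t' Q.
Proof.
move=> /fsubsetP h; apply/fsubsetP => v; rewrite !memI => /andP[/h -> ->] //.
Qed.

Lemma real_mono S T p : (forall x, S x -> T x) -> real_pt S p -> real_pt T p.
Proof.
move=> h [c [[u cS cC] sp p0 s1]]; exists c; split => //; split => // x xc.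
exact: h (cS x xc).
Qed.

Lemma real_supp S p y : real_pt S p -> p y != 0 -> S y.
Proof.
move=> [c [[u cS cC] sp p0 s1]] h; apply: cS; apply: contraNT h => h.
by rewrite sp.
Qed.

Lemma rmap_const S p (s0 : {fset V}) : real_pt S p ->
  realize_map (fun _ => s0) p = fun y => if s0 == y then 1 else 0.
Proof.
move=> pp; have [c [[u _ _] sp _ _]] := pp; have [p0 s1] := real_sum pp u sp.
rewrite (rmap_chain _ u sp); apply: funext => y; case: eqP => _ //.
by rewrite big1.
Qed.

Lemma rmap_comp' S f r p : real_pt S p ->
  realize_map (r \o f) p = realize_map r (realize_map f p).
Proof. move=> [c [[u _ _] sp _ _]]; by rewrite (rmap_comp _ _ u sp). Qed.

End Main.
Section Part2.
Local Open Scope fset_scope.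
Local Open Scope ring_scope.
Variable V : choiceType.

Lemma part2 (K : {fset V} -> Prop) (X Y : V -> Prop) (sigma : {fset V}) :
  simplicial_complex K -> K sigma ->
  let A := fun v => X v /\ Y v in
  let P := fun s : {fset V} => K s /\
      ((forall v, v \in s -> X v) \/ (forall v, v \in s -> Y v) \/
       (exists2 v, v \in s & A v)) in
  ~ P sigma ->
  poset_weak_equivalence (StarIn K sigma A) (up_inclusion P sigma)
         (fun mu => mu `|` sigma).
Proof.
move=> [K0 Kcl] Ks A P nP.
pose f := fun mu : {fset V} => mu `|` sigma.
pose r := fun t => fI t A.
have fS : forall x, StarIn K sigma A x -> up_inclusion P sigma (f x).
  move=> x [xA [x0 Kx]]; split; last exact: fsubsetUr.
  split => //; right; right; move/fset0Pn: x0 => [v vx].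
  by exists v; [rewrite in_fsetU vx | exact: xA].
have rT : forall t, up_inclusion P sigma t -> StarIn K sigma A (r t).
  move=> t [[Kt Pt] st]; split.
    by move=> v; rewrite memI => /andP[_ /asboolP].
  have [v vt Av] : exists2 v, v \in t & A v.
    case: Pt => [tX|[tY|//]]; exfalso; apply: nP; split => //.
      by left => v vs; apply: tX; exact: (fsubsetP st).
    by right; left => v vs; apply: tY; exact: (fsubsetP st).
  have vr : v \in r t by rewrite memI vt; apply/asboolP.
  split; first by apply/fset0Pn; exists v.
  apply: (Kcl t) => //; first by rewrite fsubUset fI_sub st.
  by apply/fset0Pn; exists v; rewrite in_fsetU vr.
have fmono : forall x y, StarIn K sigma A x -> StarIn K sigma A y -> x `<=` y -> f x `<=` f y.
  by move=> x y _ _ h; apply: fsetSU.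
have rmono : forall x y, up_inclusion P sigma x -> up_inclusion P sigma y -> x `<=` y -> r x `<=` r y.
  by move=> x y _ _ h; apply: fI_mono.
have rf : forall x, StarIn K sigma A x -> r (f x) = x.
  move=> x [xA _]; apply/fsetP => v; rewrite memI in_fsetU.
  case: (boolP (v \in x)) => vx /=; first by apply/asboolP; exact: xA.
  apply/negbTE/negP => /andP[vs /asboolP Av]; apply: nP; split => //.
  by right; right; exists v.
have frS : forall x, up_inclusion P sigma x -> up_inclusion P sigma ((f \o r) x).
  by move=> x h; apply: fS; apply: rT.
have idS : forall x, up_inclusion P sigma x -> up_inclusion P sigma (id x) by [].
have frm : forall x y, up_inclusion P sigma x -> up_inclusion P sigma y -> x `<=` y ->
    (f \o r) x `<=` (f \o r) y.
  by move=> x y hx hy h; apply: fmono; [apply: rT|apply: rT|apply: rmono].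
have idm : forall x y, up_inclusion P sigma x -> up_inclusion P sigma y -> x `<=` y ->
    id x `<=` id y by [].
have fri : forall x, up_inclusion P sigma x -> (f \o r) x `<=` id x.
  by move=> x [_ st]; rewrite /= fsubUset fI_sub st.
apply: (L_weq fS rT fmono rmono rf (H := fun z => Hprism (f \o r) id z.1 z.2)).
- exact: (prism_cont frS idS frm idm fri).
- by move=> q qr /=; rewrite (prism0 _ _ qr) (rmap_comp' _ _ qr).
- by move=> q qr /=; rewrite (prism1 _ _ qr) (rmap_id qr).
- move=> p s pp _ /=; apply: prism_fix; first exact: (rmap_real fS fmono pp).
  move=> y hy; split => //.
  have [c [[u cS _] sp _ _]] := pp; have [x xc [<- _]] := rmap_nz u sp hy.
  by rewrite /= rf //; apply: cS.
Qed.
End Part2.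
Section Part1.
Local Open Scope fset_scope.
Local Open Scope ring_scope.
Variable V : choiceType.

Lemma nz_sub (s t : {fset V}) : s != fset0 -> s `<=` t -> t != fset0.
Proof.
move=> /fset0Pn [v vs] /fsubsetP h; apply/fset0Pn; exists v; exact: h.
Qed.

Lemma part1 (K : {fset V} -> Prop) (X Y : V -> Prop) (sigma : {fset V}) :
  simplicial_complex K -> K sigma ->
  let A := fun v => X v /\ Y v in
  let P := fun s : {fset V} => K s /\
      ((forall v, v \in s -> X v) \/ (forall v, v \in s -> Y v) \/
       (exists2 v, v \in s & A v)) in
  P sigma ->
  poset_contractible (up_inclusion P sigma) /\
  poset_weak_equivalence (up_inclusion P sigma) (Star K sigma) id.
Proof.
move=> [K0 Kcl] Ks A P Ps.
have s0 := K0 _ Ks.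
have sS : up_inclusion P sigma sigma by split => //; exact: fsubset_refl.
split.
  pose x0 := fun y : {fset V} => if sigma == y then (1 : R) else 0.
  have cS : forall x, up_inclusion P sigma x -> up_inclusion P sigma ((fun _ => sigma) x) by [].
  have idS : forall x, up_inclusion P sigma x -> up_inclusion P sigma (id x) by [].
  have cm : forall x y, up_inclusion P sigma x -> up_inclusion P sigma y -> x `<=` y ->
     (fun _ => sigma) x `<=` (fun _ => sigma) y by move=> *; exact: fsubset_refl.
  have idm : forall x y, up_inclusion P sigma x -> up_inclusion P sigma y -> x `<=` y ->
    id x `<=` id y by [].
  have ci : forall x, up_inclusion P sigma x -> (fun _ => sigma) x `<=` id x.
    by move=> x [].
  exists x0.
    exists [:: sigma]; split.
    - split => //; first by move=> x; rewrite inE => /eqP ->.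
      by move=> x y; rewrite !inE => /eqP -> /eqP ->; rewrite fsubset_refl.
    - by move=> y; rewrite inE /x0 eq_sym => /negbTE ->.
    - by move=> y; rewrite /x0; case: ifP.
    - by rewrite big_cons big_nil /x0 eqxx addr0.
  exists (fun z => Hprism (fun _ => sigma) id z.1 (1 - z.2)); split.
  - exact: (cont_comp (cont_rev _) (prism_cont cS idS cm idm ci)).
  - by move=> x xp /=; rewrite subr0 (prism1 _ _ xp) (rmap_id xp).
  - by move=> x xp /=; rewrite subrr (prism0 _ _ xp) (rmap_const _ xp).
pose Z := fun v => if `[< forall w, w \in sigma -> X w >] then X v else Y v.
have hZ : (forall v, v \in sigma -> Z v) \/ (exists2 v, v \in sigma & A v).
  rewrite /Z; case: asboolP => sX; first by left.
  case: Ps => _ [//|[sY|h]]; [by left | by right].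
have ZXY : forall t : {fset V}, (forall v, v \in t -> Z v) ->
    (forall v, v \in t -> X v) \/ (forall v, v \in t -> Y v).
  by rewrite /Z; case: asboolP => _ t h; [left|right].
have hZt : forall t, sigma `<=` t -> ((forall v, v \in t -> X v) \/ (forall v, v \in t -> Y v)) ->
    (forall v, v \in t -> Z v) \/ (exists2 v, v \in t & A v).
  move=> t /fsubsetP st; rewrite /Z; case: asboolP => sX.
    case => [tX|tY]; first by left.
    move/fset0Pn: s0 => [v vs]; right; exists v; first exact: st.
    by split; [apply: sX | apply: tY; apply: st].
  case => [tX|tY]; last by left.
  by exfalso; apply: sX => v vs; apply: tX; apply: st.
pose r1 := fun mu : {fset V} => mu `|` sigma.
pose r2 := fun t => if `[< P t >] then t else fI t Z.
pose r := r2 \o r1.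
have idT : forall x, up_inclusion P sigma x -> Star K sigma (id x).
  by move=> x [[Kx _] sx]; split => //; rewrite (fsetUidPr _ _ sx).
have r1T : forall x, Star K sigma x -> Star K sigma (r1 x).
  move=> x [Kx Ksx]; rewrite /r1 fsetUC; split => //.
  by rewrite (fsetUidPr _ _ (fsubsetUl sigma x)).
have r2S : forall t, K t -> sigma `<=` t -> up_inclusion P sigma (r2 t).
  move=> t Kt st; rewrite /r2; case: asboolP => Pt; first by split.
  have sZ : forall v, v \in sigma -> Z v.
    case: hZ => // [[v vs Av]]; exfalso; apply: Pt; split => //; right; right.
    by exists v => //; exact: (fsubsetP st).
  have sub : sigma `<=` fI t Z.
    apply/fsubsetP => v vs; rewrite memI (fsubsetP st v vs); apply/asboolP; exact: sZ.
  split => //; split; last first.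
    have : forall v, v \in fI t Z -> Z v by move=> v; rewrite memI => /andP[_ /asboolP].
    by case/ZXY => h; [left | right; left].
  apply: (Kcl t) => //; first exact: fI_sub.
  exact: (nz_sub s0 sub).
have rT : forall x, Star K sigma x -> up_inclusion P sigma (r x).
  move=> x hx; have [Kx _] := r1T x hx; apply: r2S => //; exact: fsubsetUr.
have r2sub : forall t, r2 t `<=` t.
  by move=> t; rewrite /r2; case: asboolP => _; [exact: fsubset_refl | exact: fI_sub].
have r2fix : forall t, P t -> r2 t = t by move=> t h; rewrite /r2; case: asboolP.
have r1fix : forall t, sigma `<=` t -> r1 t = t by move=> t h; rewrite /r1; apply/fsetUidPl.
have r2mono : forall t t', K t' -> sigma `<=` t -> t `<=` t' -> r2 t `<=` r2 t'.
  move=> t t' Kt' st h; rewrite /r2; case: (asboolP (P t)) => Pt; case: (asboolP (P t')) => Pt' //.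
  - have tZ : forall v, v \in t -> Z v.
      case: Pt => Kt [tX|[tY|[v vt Av]]].
      + case: (hZt t st (or_introl tX)) => // [[v vt Av]]; exfalso; apply: Pt'.
        by split => //; right; right; exists v => //; exact: (fsubsetP h).
      + case: (hZt t st (or_intror tY)) => // [[v vt Av]]; exfalso; apply: Pt'.
        by split => //; right; right; exists v => //; exact: (fsubsetP h).
      + exfalso; apply: Pt'.
        by split => //; right; right; exists v => //; exact: (fsubsetP h).
    apply/fsubsetP => v vt; rewrite memI (fsubsetP h v vt); apply/asboolP; exact: tZ.
  - exact: fsubset_trans (fI_sub _ _) h.
  - exact: fI_mono.
have r1mono : forall x y, Star K sigma x -> Star K sigma y -> x `<=` y -> r1 x `<=` r1 y.
  by move=> x y _ _ h; apply: fsetSU.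
have rmono : forall x y, Star K sigma x -> Star K sigma y -> x `<=` y -> r x `<=` r y.
  move=> x y hx hy h; have [Ky _] := r1T y hy.
  by apply: r2mono => //; [exact: fsubsetUr | exact: fsetSU].
have rf : forall x, up_inclusion P sigma x -> r (id x) = x.
  by move=> x [Px sx]; rewrite /r /= r1fix // r2fix.
have idmS : forall x y, up_inclusion P sigma x -> up_inclusion P sigma y -> x `<=` y -> id x `<=` id y by [].
have ST : forall x, up_inclusion P sigma x -> Star K sigma x := idT.
have idTT : forall x, Star K sigma x -> Star K sigma (id x) by [].
have idmT : forall x y, Star K sigma x -> Star K sigma y -> x `<=` y -> id x `<=` id y by [].
have id_r1 : forall x, Star K sigma x -> id x `<=` r1 x by move=> x _; exact: fsubsetUl.
have rTT : forall x, Star K sigma x -> Star K sigma (r x) by move=> x h; apply: ST; apply: rT.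
have r_r1 : forall x, Star K sigma x -> r x `<=` r1 x by move=> x _; exact: r2sub.
have c1 := prism_cont idTT r1T idmT r1mono id_r1.
have c2 := prism_cont rTT r1T rmono r1mono r_r1.
pose H1z := fun z : ({fset V} -> R) * R => Hprism id r1 z.1 z.2.
pose H2z := fun z : ({fset V} -> R) * R => Hprism r r1 z.1 z.2.
have half : (0 : R) <= 2^-1 by rewrite invr_ge0.
apply: (L_weq idT rT idmS rmono rf (H := concat H2z (fun z => H1z (z.1, 1 - z.2)))).
- apply: cont_concat => //; first exact: (cont_comp (cont_rev _) c1).
  by move=> q qr; rewrite /H1z /H2z /= subr0 (prism1 _ _ qr) (prism1 _ _ qr).
- move=> q qr; rewrite /concat /= half mulr0 /H2z /= (prism0 _ _ qr).
  by rewrite (rmap_id (rmap_real rT rmono qr)).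
- move=> q qr; rewrite /concat /=.
  have -> : ((1 : R) <= 2^-1) = false by apply/negbTE; rewrite -ltNge; lra.
  have -> : 1 - (2 * 1 - 1) = 0 :> R by ring.
  by rewrite /H1z /= (prism0 _ _ qr) (rmap_id qr).
- move=> p s pp _; rewrite (rmap_id pp).
  have pT := real_mono ST pp.
  have hf : forall y, p y != 0 -> r y = y /\ r1 y = y.
    move=> y hy; have [Py sy] := real_supp pp hy.
    by rewrite /r /= !r1fix // r2fix.
  have hf1 : forall y, p y != 0 -> id y = y /\ r1 y = y.
    by move=> y hy; have [_ ?] := hf y hy.
  rewrite /concat; case: ifP => _ /=; [exact: prism_fix pT hf | exact: prism_fix pT hf1].
Qed.
End Part1.

Local Open Scope fset_scope.

Theorem proposition7p4 (V : choiceType) (K : {fset V} -> Prop) (X Y : V -> Prop) :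
  simplicial_complex K ->
  (forall v, X v \/ Y v <-> vertices K v) ->
  let A := fun v => X v /\ Y v in
  let P := fun s : {fset V} => K s /\
      ((forall v, v \in s -> X v) \/ (forall v, v \in s -> Y v) \/
       (exists2 v, v \in s & A v)) in
  forall sigma : {fset V}, K sigma ->
    (P sigma ->
       poset_contractible (up_inclusion P sigma) /\
       poset_weak_equivalence (up_inclusion P sigma) (Star K sigma) id) /\
    (~ P sigma ->
       poset_weak_equivalence (StarIn K sigma A) (up_inclusion P sigma)
         (fun mu => mu `|` sigma)).
Proof.
move=> scK _ A P sigma Ks; split.
- exact: (part1 scK Ks).
- exact: (part2 scK Ks).
Qed.
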